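(* Let $\mathcal{X}\in\mathbb{C}^{n_1\times\cdots\times n_d}$, let $\mathcal{L}$ be an $r$-dimensional subspace of $\mathbb{C}^{n_1\times\cdots\times n_d}$ spanned by orthonormal tensors $\{\mathcal{T}_k\}_{k\in[r]}$, and let $\mathbb{P}_{\mathcal{L}^\perp}$ be the orthogonal projection onto the orthogonal complement of $\mathcal{L}$. Fix $\epsilon\in(0,1)$ and suppose a linear operator $L:\mathbb{C}^{n_1\times\cdots\times n_d}\to\mathbb{C}^{m_1\times\cdots\times m_{d'}}$ satisfies: (i) $L$ is an $(\epsilon/6)$-JL embedding of all $\mathcal{Y}\in\mathcal{L}\cup\{\mathbb{P}_{\mathcal{L}^\perp}(\mathcal{X})\}$; (ii) $L$ is an $(\epsilon/24\sqrt{r})$-JL embedding of the $4r$ tensors $$\mathcal{S}':=\bigcup_{k\in[r]}\Big\{\mathcal{P}-\mathcal{T}_k,\ \mathcal{P}+\mathcal{T}_k,\ \mathcal{P}-\mathrm{i}\,\mathcal{T}_k,\ \mathcal{P}+\mathrm{i}\,\mathcal{T}_k\Big\},\qquad \mathcal{P}:=\frac{\mathbb{P}_{\mathcal{L}^\perp}(\mathcal{X})}{\|\mathbb{P}_{\mathcal{L}^\perp}(\mathcal{X})\|}.$$ Let $\mathrm{vect}:\mathbb{C}^{m_1\times\cdots\times m_{d'}}\to\mathbb{C}^{\prod_{\ell=1}^{d'}m_\ell}$ be a reshaping vectorization operator and let $\mathbf{A}\in\mathbb{C}^{m\times\prod_{\ell}m_\ell}$ be an $(\epsilon/3)$-JL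 embedding into $\mathbb{C}^m$ of (every vector in) the subspace $$\mathcal{L}':=\mathrm{span}\{\mathrm{vect}(L(\mathbb{P}_{\mathcal{L}^\perp}(\mathcal{X}))),\mathrm{vect}(L(\mathcal{T}_1)),\dots,\mathrm{vect}(L(\mathcal{T}_r))\}.$$ Then $$\big|\|\mathbf{A}(\mathrm{vect}(L(\mathcal{X}-\mathcal{Y})))\|_2^2-\|\mathcal{X}-\mathcal{Y}\|^2\big|\le\epsilon\|\mathcal{X}-\mathcal{Y}\|^2\quad\text{for all }\mathcal{Y}\in\mathcal{L}.$$
   Context: Tensors carry the inner product $\langle\mathcal{X},\mathcal{Y}\rangle=\sum\mathcal{X}_{i_1\dots i_d}\overline{\mathcal{Y}_{i_1\dots i_d}}$ and norm $\|\cdot\|$; $\mathrm{i}$ is the imaginary unit. A linear map $L$ is an $\epsilon$-JL embedding of a set $S$ if $\|L(x)\|^2=(1+\epsilon_x)\|x\|^2$ with $\epsilon_x\in(-\epsilon,\epsilon)$ for every $x\in S$. *)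

(* Defs.v *)
From mathcomp Require Import all_boot all_order all_algebra all_reals.
From mathcomp Require Export complex.
Set Implicit Arguments. Unset Strict Implicit. Unset Printing Implicit Defensive.
Import Order.TTheory GRing.Theory Num.Theory.
Local Open Scope ring_scope.
Local Open Scope complex_scope.

Section Defs.
Variable R : realType.
Local Notation C := R[i].

Definition tindex (d : nat) (n : 'I_d -> nat) : finType :=
  {dffun forall l : 'I_d, 'I_(n l)}.

Definition tensor (d : nat) (n : 'I_d -> nat) := {ffun tindex n -> C}.

Definition tdot (I : finType) (X Y : {ffun I -> C}) : C :=
  \sum_i X i * (Y i)^*.

(* squared norm ||X||^2 (a nonnegative real, stored in C) *)
Definition tnorm2 (I : finType) (X : {ffun I -> C}) : C := \sum_i `|X i| ^+ 2.

Definition tnorm (I : finType) (X : {ffun I -> C}) : C := sqrtC (tnorm2 X).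

Definition vnorm2 (M : nat) (v : 'cV[C]_M) : C := \sum_i `|v i 0| ^+ 2.

(* eps-JL embedding of a set S, with respect to given squared norms *)
Definition JL_embedding (V W : Type) (nV : V -> C) (nW : W -> C)
    (f : V -> W) (eps : R) (S : V -> Prop) : Prop :=
  forall x, S x -> exists e : R, - eps < e < eps /\ nW (f x) = (1 + e%:C) * nV x.

Definition orthonormal_fam (I : finType) (r : nat) (T : 'I_r -> {ffun I -> C}) :=
  forall k l : 'I_r, tdot (T k) (T l) = (k == l)%:R.

Definition span_of (V : lmodType C) (r : nat) (T : 'I_r -> V) : V -> Prop :=
  fun Y => exists c : 'I_r -> C, Y = \sum_k c k *: T k.

Definition span_of1 (V : lmodType C) (r : nat) (w0 : V) (w : 'I_r -> V) : V -> Prop :=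
  fun v => exists (c0 : C) (c : 'I_r -> C), v = c0 *: w0 + \sum_k c k *: w k.

(* orthogonal projection onto the orthogonal complement of span T, T orthonormal *)
Definition proj_perp (I : finType) (r : nat) (T : 'I_r -> {ffun I -> C})
    (X : {ffun I -> C}) : {ffun I -> C} :=
  X - \sum_k tdot X (T k) *: T k.

(* reshaping vectorization given by a bijection e of the index sets *)
Definition vect (J : finType) (M : nat) (e : 'I_M -> J) (Z : {ffun J -> C}) : 'cV[C]_M :=
  \col_k Z (e k).

Definition Sprime (I : finType) (r : nat) (T : 'I_r -> {ffun I -> C})
    (X : {ffun I -> C}) : {ffun I -> C} -> Prop :=
  let P := (tnorm (proj_perp T X))^-1 *: proj_perp T X in
  fun Z => exists k : 'I_r,
    Z = P - T k \/ Z = P + T k \/ Z = P - 'i *: T k \/ Z = P + 'i *: T k.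

End Defs.

(* Main.v *)
Require Import Defs.
From mathcomp Require Import all_boot all_order all_algebra all_reals.
From mathcomp Require Import complex.
From mathcomp Require Import ring lra.
Import Order.TTheory GRing.Theory Num.Theory.
Local Open Scope ring_scope.
Local Open Scope complex_scope.
Set Implicit Arguments. Unset Strict Implicit. Unset Printing Implicit Defensive.

Section Helpers.
Variable R : realType.
Local Notation C := R[i].
Variable I : finType.
Implicit Types X Y Z : {ffun I -> C}.

Lemma tdotDl X Y Z : tdot (X + Y) Z = tdot X Z + tdot Y Z.
Proof. by rewrite /tdot -big_split; apply: eq_bigr => i _; rewrite ffunE mulrDl. Qed.
Lemma tdotDr X Y Z : tdot X (Y + Z) = tdot X Y + tdot X Z.
Proof. by rewrite /tdot -big_split; apply: eq_bigr => i _; rewrite ffunE rmorphD mulrDr. Qed.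
Lemma tdotZl a X Y : tdot (a *: X) Y = a * tdot X Y.
Proof. by rewrite /tdot mulr_sumr; apply: eq_bigr => i _; rewrite ffunE mulrA. Qed.
Lemma tdotZr a X Y : tdot X (a *: Y) = a^* * tdot X Y.
Proof. rewrite /tdot mulr_sumr; apply: eq_bigr => i _; rewrite ffunE rmorphM /=. ring. Qed.
Lemma tdotNl X Y : tdot (- X) Y = - tdot X Y.
Proof. by rewrite -scaleN1r tdotZl mulN1r. Qed.
Lemma tdotNr X Y : tdot X (- Y) = - tdot X Y.
Proof. by rewrite -scaleN1r tdotZr rmorphN rmorph1 mulN1r. Qed.
Lemma tdotBl X Y Z : tdot (X - Y) Z = tdot X Z - tdot Y Z.
Proof. by rewrite tdotDl tdotNl. Qed.
Lemma tdotBr X Y Z : tdot X (Y - Z) = tdot X Y - tdot X Z.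
Proof. by rewrite tdotDr tdotNr. Qed.
Lemma tdot_suml (r : nat) (F : 'I_r -> {ffun I -> C}) Y :
  tdot (\sum_k F k) Y = \sum_k tdot (F k) Y.
Proof.
elim/big_rec2: _ => [|k s t _ <-]; last by rewrite tdotDl.
by rewrite /tdot big1 // => i _; rewrite ffunE mul0r.
Qed.
Lemma tdot_sumr (r : nat) (F : 'I_r -> {ffun I -> C}) Y :
  tdot Y (\sum_k F k) = \sum_k tdot Y (F k).
Proof.
elim/big_rec2: _ => [|k s t _ <-]; last by rewrite tdotDr.
by rewrite /tdot big1 // => i _; rewrite ffunE rmorph0 mulr0.
Qed.
Lemma tdotC X Y : tdot Y X = (tdot X Y)^*.
Proof.
rewrite /tdot rmorph_sum; apply: eq_bigr => i _.
by rewrite rmorphM /= conjcK mulrC.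
Qed.
Lemma tnorm2E X : tnorm2 X = tdot X X.
Proof. by apply: eq_bigr => i _; rewrite sqr_normc. Qed.
Lemma tnorm2D X Y : tnorm2 (X + Y) = tnorm2 X + tnorm2 Y + (tdot X Y + (tdot X Y)^*).
Proof. rewrite !tnorm2E tdotDl !tdotDr (tdotC X Y). ring. Qed.
Lemma tnorm2Z a X : tnorm2 (a *: X) = `|a| ^+ 2 * tnorm2 X.
Proof. by rewrite !tnorm2E tdotZl tdotZr mulrA sqr_normc. Qed.
Lemma tnorm2_ge0 X : 0 <= tnorm2 X.
Proof. by apply: sumr_ge0 => i _; rewrite exprn_ge0. Qed.
Lemma tnorm2_real X : ((complex.Re (tnorm2 X))%:C : C) = tnorm2 X.
Proof. by apply: RRe_real; apply: ger0_real; apply: tnorm2_ge0. Qed.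
Lemma tnorm2_Rge0 X : 0 <= (complex.Re (tnorm2 X)).
Proof. by rewrite -ler0c tnorm2_real tnorm2_ge0. Qed.
Lemma tnorm2_eq0 X : tnorm2 X = 0 -> X = 0.
Proof.
move=> h; apply/ffunP => i; rewrite ffunE.
have := (psumr_eq0P (fun i _ => exprn_ge0 2 (normr_ge0 (X i))) h (i:=i)).
by move=> H; move: (H isT) => /eqP; rewrite expf_eq0 /= normr_eq0 => /eqP.
Qed.
Lemma tdot0l Y : tdot 0 Y = 0.
Proof. by rewrite /tdot big1 // => i _; rewrite ffunE mul0r. Qed.

Lemma polar X Y : 4 * tdot X Y = tnorm2 (X + Y) - tnorm2 (X - Y)
   + 'i * tnorm2 (X + 'i *: Y) - 'i * tnorm2 (X - 'i *: Y).
Proof.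
rewrite !tnorm2D !tdotNr !tdotZr !rmorphN !rmorphM /=.
have -> : tnorm2 (- Y) = tnorm2 Y by rewrite !tnorm2E tdotNl tdotNr opprK.
have -> : tnorm2 (- ('i *: Y)) = tnorm2 Y.
  rewrite !tnorm2E tdotNl tdotNr opprK tdotZl tdotZr. by case: (tdot Y Y) => a b; simpc.
have -> : tnorm2 ('i *: Y) = tnorm2 Y.
  rewrite !tnorm2E tdotZl tdotZr. by case: (tdot Y Y) => a b; simpc.

move: (tdot X Y) (tnorm2 X) (tnorm2 Y) => [a b] [c d] [e f].
apply/eqP; rewrite eq_complex /=; apply/andP; split; apply/eqP; ring.
Qed.

Lemma ReM_real (k : R) (x : C) : complex.Re (k%:C * x) = k * complex.Re x.
Proof. by case: x => a b /=; ring. Qed.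

Lemma ReD (x y : C) : complex.Re (x + y) = complex.Re x + complex.Re y.
Proof. by case: x; case: y. Qed.
Lemma ReJ (x : C) : complex.Re (x^*) = complex.Re x.
Proof. by case: x. Qed.

Lemma normC_real (x : R) : `|(x%:C : C)| = (`|x|)%:C.
Proof. by rewrite normc_def /= expr0n /= addr0 sqrtr_sqr. Qed.

Lemma Re_le_norm (x : C) : `|complex.Re x| <= complex.Re `|x|.
Proof. by have := normc_ge_Re x; rewrite lecE => /andP[]. Qed.

End Helpers.

Section Vect.
Variable R : realType.
Local Notation C := R[i].
Variables (J : finType) (M : nat) (e : 'I_M -> J).
Lemma vectD (U V : {ffun J -> C}) : vect e (U + V) = vect e U + vect e V.
Proof. by apply/matrixP => i j; rewrite !mxE ffunE. Qed.
Lemma vectZ a (U : {ffun J -> C}) : vect e (a *: U) = a *: vect e U.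
Proof. by apply/matrixP => i j; rewrite !mxE ffunE. Qed.
Lemma vect_sum (r : nat) (F : 'I_r -> {ffun J -> C}) :
  vect e (\sum_k F k) = \sum_k vect e (F k).
Proof.
apply/matrixP => i j; rewrite !mxE sum_ffunE summxE.
by apply: eq_bigr => k _; rewrite mxE.
Qed.
Lemma vnorm2_vect (he : bijective e) (U : {ffun J -> C}) : vnorm2 (vect e U) = tnorm2 U.
Proof.
rewrite /vnorm2 /tnorm2 (reindex e); last by apply: onW_bij.
by apply: eq_bigr => i _; rewrite mxE.
Qed.
End Vect.
Lemma fin (R : realType) (eps e1 e2 e3 nz nw cr : R) :
  0 < eps -> eps < 1 -> 0 <= nz -> 0 <= nw ->
  - (eps/6) < e1 -> e1 < eps/6 -> - (eps/6) < e2 -> e2 < eps/6 ->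
  - (eps/3) < e3 -> e3 < eps/3 ->
  `|2 * cr| <= eps/12 * (nz + nw) ->
  `|(1 + e3) * ((1 + e1) * nz + (1 + e2) * nw + 2 * cr) - (nz + nw)| <= eps * (nz + nw).
Proof.
move=> he0 he1 hz hw a1 b1 a2 b2 a3 b3 hc.
move: hc; rewrite ler_norml => /andP[c1 c2].
set M := (1 + e1) * nz + (1 + e2) * nw + 2 * cr.
have m1 : M - (nz + nw) <= eps/4 * (nz+nw) by rewrite /M; nra.
have m2 : - (eps/4 * (nz+nw)) <= M - (nz + nw) by rewrite /M; nra.
have m0 : 0 <= M by nra.
rewrite ler_norml; apply/andP; split; nra.
Qed.
Lemma amgm (R : realType) (r : nat) (eps s : R) (al : 'I_r -> R) :
  0 < eps -> 
  2 * (\sum_k al k * (s * (2 * (eps / (24 * Num.sqrt r%:R)))))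
   <= eps / 12 * (s ^+ 2 + \sum_k al k ^+ 2).
Proof.
move=> he.
case: r al => [|r] al.
  rewrite !big_ord0 mulr0 addr0 mulr_ge0 //; first by lra.
  exact: sqr_ge0.
set q := Num.sqrt _.
have hq : 0 < q by rewrite sqrtr_gt0 ltr0n.
have hr : r.+1%:R = q ^+ 2 by rewrite sqr_sqrtr // ler0n.
have -> : s ^+ 2 = \sum_(k < r.+1) (s ^+ 2 / q ^+ 2).
  by rewrite sumr_const card_ord -mulr_natl hr mulrCA divff ?mulr1 // expf_neq0 // gt_eqF.
rewrite -big_split mulr_sumr mulr_sumr /= ler_sum // => k _.
rewrite -subr_ge0.
have -> : eps / 12 * (s ^+ 2 / q ^+ 2 + al k ^+ 2) - 2 * (al k * (s * (2 * (eps / (24 * q)))))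
   = eps / 12 * (s / q - al k) ^+ 2.
  by field; rewrite gt_eqF.
by rewrite mulr_ge0 ?sqr_ge0 //; lra.
Qed.

Theorem theorem5 (R : realType) (d : nat) (n : 'I_d -> nat)
    (d' : nat) (ms : 'I_d' -> nat) (r m : nat)
    (X : tensor R n) (T : 'I_r -> tensor R n) (hT : orthonormal_fam T)
    (eps : R) (heps : 0 < eps < 1)
    (L : {linear tensor R n -> tensor R ms})
    (h1 : JL_embedding (@tnorm2 R _) (@tnorm2 R _) L (eps / 6)
            (fun Y => span_of T Y \/ Y = proj_perp T X))
    (h2 : JL_embedding (@tnorm2 R _) (@tnorm2 R _) L
            (eps / (24 * Num.sqrt (r%:R)))
            (Sprime T X))
    (e : 'I_(\prod_(l < d') ms l) -> tindex ms) (he : bijective e)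
    (A : 'M[R[i]]_(m, \prod_(l < d') ms l))
    (h3 : JL_embedding (@vnorm2 R _) (@vnorm2 R _) (fun v => A *m v) (eps / 3)
            (span_of1 (vect e (L (proj_perp T X))) (fun k => vect e (L (T k))))) :
  forall Y : tensor R n, span_of T Y ->
    `| vnorm2 (A *m vect e (L (X - Y))) - tnorm2 (X - Y) |
      <= eps%:C * tnorm2 (X - Y).
Proof.
move=> Y [c ->].
case/andP: heps => he0 he1.
set z := proj_perp T X.
pose a k := tdot X (T k) - c k.
set w := \sum_k a k *: T k.
have hXY : X - \sum_k c k *: T k = z + w.
  have -> : w = \sum_k tdot X (T k) *: T k - \sum_k c k *: T k.
    by rewrite -sumrB; apply: eq_bigr => k _; rewrite scalerBl.
  by rewrite /z /proj_perp addrA subrK.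
rewrite hXY.
have hzT : forall l, tdot z (T l) = 0.
  move=> l; rewrite /z /proj_perp tdotBl tdot_suml (bigD1 l) //= tdotZl hT eqxx mulr1.
  rewrite big1 ?addr0 ?subrr // => k hk; by rewrite tdotZl hT (negbTE hk) mulr0.
have hzw : tdot z w = 0.
  by rewrite /w tdot_sumr big1 // => k _; rewrite tdotZr hzT mulr0.
have hww : tnorm2 w = \sum_k `|a k| ^+ 2.
  rewrite tnorm2E {1}/w tdot_suml; apply: eq_bigr => k _.
  rewrite tdotZl /w tdot_sumr (bigD1 k) //= tdotZr hT eqxx mulr1 big1 ?addr0.
    by rewrite sqr_normc.
  by move=> l hl; rewrite tdotZr hT eq_sym (negbTE hl) mulr0.
have hN : tnorm2 (z + w) = tnorm2 z + tnorm2 w by rewrite tnorm2D hzw rmorph0 !addr0.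
have hLw : L w = \sum_k a k *: L (T k).
  by rewrite /w linear_sum; apply: eq_bigr => k _; rewrite linearZ.
have hLzw : L (z + w) = L z + L w by rewrite linearD.
have [e3 [he3 Hv]] : exists e3 : R, - (eps/3) < e3 < eps/3 /\
    vnorm2 (A *m vect e (L (z + w))) = (1 + e3%:C) * tnorm2 (L (z + w)).
  have hmem : span_of1 (vect e (L (proj_perp T X))) (fun k => vect e (L (T k)))
      (vect e (L (z + w))).
    exists 1, a; rewrite hLzw vectD scale1r hLw vect_sum; congr (_ + _).
    by apply: eq_bigr => k _; rewrite vectZ.
  have [e3' [h e3E]] := h3 _ hmem.
  by exists e3'; split => //; rewrite e3E vnorm2_vect.
have [e1 [he1' Hz]] := h1 z (or_intror erefl).
have [e2 [he2' Hw]] := h1 w (or_introl (ex_intro _ a erefl)).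
set nz := complex.Re (tnorm2 z).
set del := eps / (24 * Num.sqrt r%:R) in h2 *.
have hdel : 0 <= del by rewrite divr_ge0 ?mulr_ge0 ?sqrtr_ge0 // ltW.
have nzge : 0 <= nz := tnorm2_Rge0 z.
have hk : forall k, `|tdot (L z) (L (T k))| <= (Num.sqrt nz * (2 * del))%:C.
  move=> k.
  have [nz0|nzpos] := eqVneq nz 0.
    have z0 : z = 0 by apply: tnorm2_eq0; rewrite -tnorm2_real -/nz nz0.
    rewrite z0 linear0 tdot0l normr0 ler0c mulr_ge0 ?sqrtr_ge0 //.
    by rewrite mulr_ge0.
  set s := Num.sqrt nz.
  have spos : 0 < s by rewrite sqrtr_gt0 lt_def nzpos nzge.
  have hs2 : tnorm2 z = (s%:C)^+2.
    by rewrite -rmorphXn sqr_sqrtr //; exact: (esym (tnorm2_real z)).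
  have htn : tnorm z = s%:C by rewrite /tnorm hs2 sqrCK // ler0c ltW.
  have sC0 : (s%:C : R[i]) != 0 by rewrite eq_complex /= negb_and gt_eqF.
  set P := (s%:C)^-1 *: z.
  have hzP : z = s%:C *: P by rewrite /P scalerA divff // scale1r.
  have hPP : tnorm2 P = 1.
    rewrite /P tnorm2Z normfV normC_real ger0_norm ?(ltW spos) // hs2.
    by rewrite exprVn mulVf // expf_neq0.
  have hPT : tdot P (T k) = 0 by rewrite /P tdotZl hzT mulr0.
  have hTT : tnorm2 (T k) = 1 by rewrite tnorm2E hT eqxx.
  have n2 : forall b : R[i], b * b^* = 1 -> tnorm2 (P + b *: T k) = 2.
    move=> b hb; rewrite tnorm2D tdotZr hPT mulr0 rmorph0 !addr0 hPP tnorm2E.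
    by rewrite tdotZl tdotZr mulrA hb mul1r -tnorm2E hTT.
  have ii : ('i : R[i]) * 'i^* = 1 by simpc.
  have t1 : tnorm2 (P + T k) = 2 by rewrite -[T k]scale1r n2 // rmorph1 mulr1.
  have t2 : tnorm2 (P - T k) = 2 by rewrite -scaleN1r n2 // rmorphN rmorph1 mulrNN mulr1.
  have t3 : tnorm2 (P + 'i *: T k) = 2 by rewrite n2.
  have t4 : tnorm2 (P - 'i *: T k) = 2 by rewrite -scaleNr n2 // rmorphN mulrNN.
  have mem : forall Z, (Z = P - T k \/ Z = P + T k \/ Z = P - 'i *: T k \/ Z = P + 'i *: T k) ->
      Sprime T X Z.
    by move=> Z hZ; rewrite /Sprime /= -/z htn; exists k.
  have [d1 [hd1 E1]] := h2 _ (mem (P + T k) ltac:(by right; left)).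
  have [d2 [hd2 E2]] := h2 _ (mem (P - T k) ltac:(by left)).
  have [d3 [hd3 E3]] := h2 _ (mem (P + 'i *: T k) ltac:(by right; right; right)).
  have [d4 [hd4 E4]] := h2 _ (mem (P - 'i *: T k) ltac:(by right; right; left)).
  rewrite t1 in E1; rewrite t2 in E2; rewrite t3 in E3; rewrite t4 in E4.
  rewrite linearD in E1; rewrite linearB in E2; rewrite linearD [L ('i *: _)]linearZ in E3.
  rewrite linearB [L ('i *: _)]linearZ in E4.
  have E := polar (L P) (L (T k)).
  rewrite E1 E2 E3 E4 in E.
  set t := tdot (L P) (L (T k)) in E.
  have E' : 4 * t = 2 * ((d1 - d2)%:C + 'i * (d3 - d4)%:C).
    by rewrite E !rmorphB /=; ring.
  have hnt : `|t| <= (2 * del)%:C.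
    have : `|4 * t| <= (2 * (`|d1 - d2| + `|d3 - d4|))%:C.
      rewrite E' normrM normr_nat rmorphM rmorph_nat /=; apply: ler_wpM2l.
        by rewrite ler0n.
      rewrite [in X in _ <= X]rmorphD /=; apply: le_trans (ler_normD _ _) _.
      rewrite normrM !normC_real.
      have -> : `|('i : R[i])| = 1.
        by rewrite normc_def /= expr0n /= add0r expr1n sqrtr1.
      by rewrite mul1r.
    rewrite normrM normr_nat => H0.
    have H : (4 * Normc.normc t)%:C <= (2 * (`|d1 - d2| + `|d3 - d4|))%:C.
      by rewrite rmorphM rmorph_nat.
    rewrite lecR in H.
    rewrite -[`|t|]/((Normc.normc t)%:C) lecR.
    move: hd1 hd2 hd3 hd4 => /andP[a1 b1] /andP[a2 b2] /andP[a3 b3] /andP[a4 b4].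
    have q1 : `|d1 - d2| <= 2 * del by rewrite ler_norml; apply/andP; split; lra.
    have q2 : `|d3 - d4| <= 2 * del by rewrite ler_norml; apply/andP; split; lra.
    lra.
  rewrite hzP linearZ tdotZl normrM normC_real (ger0_norm (ltW spos)) rmorphM /=.
  by apply: ler_wpM2l => //; rewrite ler0c ltW.
set s := Num.sqrt nz.
set cr := tdot (L z) (L w).
have hcr : `|cr| <= (\sum_k Normc.normc (a k) * (s * (2 * del)))%:C.
  rewrite /cr hLw tdot_sumr rmorph_sum /=.
  apply: le_trans (ler_norm_sum _ _ _) _; apply: ler_sum => k _.
  rewrite tdotZr normrM normcJ rmorphM /=.
  rewrite -[(Normc.normc (a k))%:C]/(`|a k|).
  exact: (ler_wpM2l (normr_ge0 (a k)) (hk k)).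
have hRecr : `|complex.Re cr| <= \sum_k Normc.normc (a k) * (s * (2 * del)).
  apply: le_trans (Re_le_norm cr) _.
  by move: hcr; rewrite lecE => /andP[_ ->].
set nw := complex.Re (tnorm2 w).
have hnw : nw = \sum_k Normc.normc (a k) ^+ 2.
  rewrite /nw hww.
  have -> : \sum_k `|a k| ^+ 2 = (\sum_k Normc.normc (a k) ^+ 2)%:C.
    by rewrite rmorph_sum; apply: eq_bigr => k _; rewrite rmorphXn.
  by [].
have hcross : `|2 * complex.Re cr| <= eps / 12 * (nz + nw).
  have hs : s ^+ 2 = nz by rewrite sqr_sqrtr.
  rewrite normrM ger0_norm // hnw -hs.
  apply: le_trans _ (amgm s (fun k => Normc.normc (a k)) he0).
  by apply: ler_wpM2l => //; exact: hRecr.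
set Mv := complex.Re (tnorm2 (L (z + w))).
have hMv : Mv = (1 + e1) * nz + (1 + e2) * nw + 2 * complex.Re cr.
  have r1 : forall x : R, 1 + x%:C = (1 + x)%:C :> R[i] by move=> x; rewrite rmorphD rmorph1.
  rewrite /Mv hLzw tnorm2D Hz Hw !ReD ReJ !r1 !ReM_real.
  rewrite -/nz -/nw -/cr; ring.
have Ez : tnorm2 z = nz%:C := esym (tnorm2_real z).
have Ew : tnorm2 w = nw%:C := esym (tnorm2_real w).
have EM : tnorm2 (L (z + w)) = Mv%:C := esym (tnorm2_real (L (z + w))).
rewrite Hv hN EM Ez Ew.
have -> : (1 + e3%:C) * Mv%:C - (nz%:C + nw%:C) = ((1 + e3) * Mv - (nz + nw))%:C.
  by rewrite rmorphB rmorphM !rmorphD rmorph1.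
have -> : eps%:C * (nz%:C + nw%:C) = (eps * (nz + nw))%:C.
  by rewrite rmorphM rmorphD.
rewrite normC_real lecR hMv.
move: he1' he2' he3 => /andP[a1 b1] /andP[a2 b2] /andP[a3 b3].
apply: fin => //; exact: tnorm2_Rge0.
Qed.
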